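(* Let $\theta$ be a complex Garsia number whose minimal polynomial has constant term $\pm2$, let $\lambda=1/\theta$, and for $n\ge1$ let $\mathcal A_\lambda^{(n)}=\{\sum_{k=0}^{n-1}a_k\lambda^k: a_k\in\{-1,1\}\}$. Then (a) $\#\mathcal A_\lambda^{(n)}=2^n$ for all $n\ge1$; and (b) there exists $c>0$ such that for all $n\ge1$ and all distinct $x,y\in\mathcal A_\lambda^{(n)}$, $|x-y|\ge c\cdot 2^{-n/2}$.
   Context: An algebraic integer $\theta$ with $|\theta|>1$ is a Garsia number if all its Galois conjugates have modulus greater than one; a complex Garsia number is a non-real Garsia number. *)

(* Defs.v *)
From mathcomp Require Import all_boot all_order all_algebra all_field.
Set Implicit Arguments. Unset Strict Implicit. Unset Printing Implicit Defensive.
Import Order.TTheory GRing.Theory Num.Theory.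
Local Open Scope ring_scope.

Definition garsia (theta : algC) : Prop :=
  [/\ theta \in Aint, 1 < `|theta| &
      forall z : algC, root (minCpoly theta) z -> 1 < `|z|].

Definition complex_garsia (theta : algC) : Prop :=
  garsia theta /\ theta \notin Num.real.

Definition digit (b : bool) : algC := if b then 1 else -1.

(* A_lambda^(n) as a list (possibly with repetitions) of all sums
   sum_{k<n} a_k lambda^k, a_k in {-1,1} *)
Definition Aset (lam : algC) (n : nat) : seq algC :=
  [seq \sum_(k < n) digit (a k) * lam ^+ k | a : {ffun 'I_n -> bool}].

(* Main.v *)
Require Import Defs.
From mathcomp Require Import all_boot all_order all_algebra all_field.
From mathcomp Require Import fingroup perm mpoly.
From mathcomp Require Import zify ring.
Set Implicit Arguments. Unset Strict Implicit. Unset Printing Implicit Defensive.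
Import Order.TTheory GRing.Theory Num.Theory.
Local Open Scope ring_scope.

Lemma mmapXU (n : nat) (R : nzRingType) (S : comNzRingType) (f : {rmorphism R -> S}) (h : 'I_n -> S) i :
  mmap f h ('X_i : {mpoly R[n]}) = h i.
Proof. by rewrite mmapX mmap1U. Qed.

Lemma mmap_int_in (d : nat) (w : 'I_d -> algC) (t : {mpoly int[d]}) :
  (forall i, w i \in Num.int) -> mmap intr w t \in Num.int.
Proof.
move=> hw; rewrite /mmap; apply: rpred_sum => m _; apply: rpredM.
  by rewrite rpred_int.
by rewrite /mmap1; apply: rpred_prod => i _; apply: rpredX.
Qed.

Lemma mmap_comp (d : nat) (v : 'I_d -> algC) (t : {mpoly int[d]}) (S : d.-tuple {mpoly int[d]}) :
  mmap intr v (t \mPo S) = mmap intr (fun i => mmap intr v (tnth S i)) t.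
Proof.
rewrite /comp_mpoly. rewrite [mmap _ (tnth S) t]/mmap. rewrite raddf_sum /=.
apply: eq_bigr => m _.
rewrite rmorphM /= mmapC; congr (_ * _).
by rewrite /mmap1 rmorph_prod; apply: eq_bigr => i _; rewrite rmorphXn.
Qed.

Lemma mmap_mesym (d : nat) (v : 'I_d -> algC) k :
  mmap intr v (mesym d int k) = (mesym d algC k).@[v].
Proof.
rewrite /mesym !raddf_sum /=; apply: eq_bigr => h _.
rewrite !rmorph_prod /=; apply: eq_bigr => i _.
by rewrite mmapXU mevalXU.
Qed.

Lemma msymXU (n : nat) (R : comNzRingType) (s : 'S_n) i :
  msym s ('X_i : {mpoly R[n]}) = 'X_(s i).
Proof. by rewrite /msym mmapXU. Qed.

Lemma norm_int (d : nat) (cs : d.-tuple algC) (Q : {poly algC}) :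
  \prod_(c <- cs) ('X - c%:P) \is a polyOver Num.int -> Q \is a polyOver Num.int ->
  \prod_(c <- cs) Q.[c] \in Num.int.
Proof.
move=> hM /floorpP [qz ->].
pose F (y : {mpoly int[d]}) := \sum_(j < size qz) (qz`_j)%:MP * y ^+ j.
pose pe := \prod_(i < d) F 'X_i.
have symp : pe \is symmetric.
  apply/issymP => s; rewrite /pe rmorph_prod /=.
  rewrite [RHS](reindex_inj (@perm_inj _ s)) /=.
  apply: eq_bigr => i _; rewrite /F rmorph_sum /=; apply: eq_bigr => j _.
  by rewrite rmorphM rmorphXn /= msymXU /msym mmapC.
have [t [Ht _]] := sym_fundamental symp.
have key : mmap intr (tnth cs) pe = \prod_(c <- cs) (map_poly intr qz).[c].
  rewrite big_tuple rmorph_prod; apply: eq_bigr => i _.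
  rewrite /F rmorph_sum /= horner_coef size_map_inj_poly //; last exact: intr_inj.
  by apply: eq_bigr => j _; rewrite rmorphM rmorphXn /= mmapC mmapXU coef_map.
rewrite -key -Ht mmap_comp; apply: mmap_int_in => i.
rewrite tnth_map /= tnth_ord_tuple mmap_mesym.
have hk : (i.+1 < d.+1)%N by rewrite ltnS.
have := mroots_coeff cs (Ordinal hk) => /= /(congr1 (fun x => (-1) ^+ i.+1 * x)).
rewrite mulrA -exprMn mulrNN mulr1 expr1n mul1r => <-.
apply: rpredM; first by apply: rpredX; rewrite rpredN rpred1.
by apply/polyOverP.
Qed.

Lemma transfer (x y : algC) (Q : {poly algC}) :
  root (minCpoly x) y -> Q \is a polyOver Num.int -> Q.[x] = 0 -> Q.[y] = 0.
Proof.
move=> hy /floorpP[qz ->] hx.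
have [p [Dp _] hp] := minCpolyP x.
pose q := map_poly (intr : int -> rat) qz.
have Eq : map_poly intr qz = map_poly ratr q :> {poly algC}.
  by apply/polyP => i; rewrite /q !coef_map /= ratr_int.
have dv : p %| q by rewrite -hp -Eq; apply/eqP.
apply/eqP; rewrite Eq; apply: root_dvdp hy.
by rewrite Dp dvdp_map.
Qed.

Lemma conj_root (x y : algC) : root (minCpoly x) y -> root (minCpoly y) x.
Proof.
have [p [Dp mp] hp] := minCpolyP x; have [pc [Dc mc] hc] := minCpolyP y.
move=> hy; have dv : pc %| p by rewrite -hc -Dp.
case/dvdpP: dv => K DK.
have : root (map_poly ratr p) x by rewrite -Dp root_minCpoly.
rewrite DK rmorphM rootM => /orP [hK|]; last by rewrite Dc.
exfalso; have dK : p %| K by rewrite -hp.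
have pn0 : p != 0 by apply: monic_neq0.
have Kn0 : K != 0 by apply: contra pn0; rewrite DK => /eqP ->; rewrite mul0r.
have pcn0 : pc != 0 by apply: monic_neq0.
have := dvdp_leq Kn0 dK; rewrite DK size_mul //.
have := size_minCpoly y; rewrite Dc size_map_poly.
have : (0 < size K)%N by rewrite size_poly_gt0.
by move=> _; case: (size pc) => [|[|m]] //= _; rewrite !addnS /= ltnNge leq_addr.
Qed.
Definition ed (a b : bool) : algC := if a == b then 0 else digit a.

Lemma ed_diff a b : digit a - digit b = 2 * ed a b.
Proof. by case: a; case: b; rewrite /ed /digit /=; rewrite ?subrr ?mulr0 //; ring. Qed.

Lemma ed_int a b : ed a b \in Num.int.
Proof. by case: a; case: b; rewrite /ed /digit /= ?rpredN ?rpred1 ?rpred0. Qed.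

Lemma ed_01 a b : ed a b = 0 \/ `|ed a b| = 1.
Proof. by case: a; case: b; rewrite /ed /digit /=; auto; right; rewrite ?normrN normr1. Qed.

Lemma ed_le1 a b : `|ed a b| <= 1.
Proof. by case: (ed_01 a b) => ->; rewrite ?normr0 ?ler01. Qed.

Lemma ed_eq0 a b : ed a b = 0 -> a = b.
Proof.
case: a; case: b; rewrite /ed /digit //= => /eqP; rewrite ?oppr_eq0 oner_eq0 //.
Qed.

Definition ext (n : nat) (f : 'I_n -> algC) : nat -> algC :=
  fun k => if insub k is Some i then f i else 0.

Lemma ext_val n (f : 'I_n -> algC) (i : 'I_n) : ext f i = f i.
Proof. by rewrite /ext valK. Qed.

Lemma ext_int n (a b : 'I_n -> bool) k : ext (fun i => ed (a i) (b i)) k \in Num.int.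
Proof. by rewrite /ext; case: insub => [i|]; rewrite ?ed_int ?rpred0. Qed.

Lemma ext_01 n (a b : 'I_n -> bool) k :
  ext (fun i => ed (a i) (b i)) k = 0 \/ `|ext (fun i => ed (a i) (b i)) k| = 1.
Proof. by rewrite /ext; case: insub => [i|]; [apply: ed_01 | left]. Qed.

Lemma ext_le1 n (a b : 'I_n -> bool) k : `|ext (fun i => ed (a i) (b i)) k| <= 1.
Proof. by case: (ext_01 a b k) => ->; rewrite ?normr0 ?ler01. Qed.

Section Garsia.
Variable theta : algC.
Hypothesis hA : theta \in Aint.
Hypothesis hgar : forall z : algC, root (minCpoly theta) z -> 1 < `|z|.
Hypothesis h0 : (minCpoly theta)`_0 = 2 \/ (minCpoly theta)`_0 = -2.

Definition rts := sval (closed_field_poly_normal (minCpoly theta)).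

Lemma DM : minCpoly theta = \prod_(z <- rts) ('X - z%:P).
Proof.
rewrite /rts; case: (closed_field_poly_normal _) => r /= ->.
by rewrite (monicP (minCpoly_monic theta)) scale1r.
Qed.

Lemma Mint : minCpoly theta \is a polyOver Num.int.
Proof. exact: hA. Qed.

Lemma rts_root c : c \in rts -> root (minCpoly theta) c.
Proof. by rewrite DM root_prod_XsubC. Qed.

Lemma rts_gt1 c : c \in rts -> 1 < `|c|.
Proof. by move/rts_root/hgar. Qed.

Lemma rts_neq0 c : c \in rts -> c != 0.
Proof. by move/rts_gt1; apply: contraTneq => ->; rewrite normr0 ltr10. Qed.

Lemma theta_in : theta \in rts.
Proof. by rewrite -root_prod_XsubC -DM root_minCpoly. Qed.

Lemma prod_rts : \prod_(c <- rts) `|c| = 2.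
Proof.
have : `|(minCpoly theta)`_0| = 2 by case: h0 => ->; rewrite ?normrN normr_nat.
rewrite -horner_coef0 DM horner_prod normr_prod => <-.
by apply: eq_bigr => c _; rewrite hornerXsubC sub0r normrN.
Qed.

Lemma NI (Q : {poly algC}) : Q \is a polyOver Num.int -> \prod_(c <- rts) Q.[c] \in Num.int.
Proof.
move=> hQ; have := @norm_int (size rts) (in_tuple rts) Q; apply => //.
by rewrite -DM Mint.
Qed.

Lemma vanish_all (Q : {poly algC}) : Q \is a polyOver Num.int -> Q.[theta] = 0 ->
  forall c, c \in rts -> Q.[c] = 0.
Proof. by move=> hQ hQ0 c /rts_root hc; exact: (transfer hc hQ hQ0). Qed.

Lemma nonvanish (Q : {poly algC}) : Q \is a polyOver Num.int -> Q.[theta] != 0 ->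
  forall c, c \in rts -> Q.[c] != 0.
Proof.
move=> hQ hQ0 c /rts_root hc; apply: contra hQ0 => /eqP hc0; apply/eqP.
by apply: transfer (conj_root hc) hQ hc0.
Qed.

Lemma U (Q : {poly algC}) : Q \is a polyOver Num.int -> `|Q`_0| = 1 -> Q.[theta] != 0.
Proof.
move=> hQ hQ1; apply/negP => /eqP hz.
pose R := Poly (behead Q).
have DQ : Q = cons_poly Q`_0 R.
  apply/polyP => i; rewrite coef_cons coef_Poly.
  by case: i => [|i] //=; rewrite nth_behead.
have hR : R \is a polyOver Num.int.
  by apply/polyOverP => i; rewrite coef_Poly nth_behead; apply/polyOverP.
have E : \prod_(c <- rts) (R.[c] * c) = \prod_(c <- rts) (- Q`_0).
  apply: eq_big_seq => c hc; have := vanish_all hQ hz hc.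
  by rewrite {1}DQ horner_cons => /eqP; rewrite addr_eq0 => /eqP.
move: E; rewrite big_split /= => E.
have E2 : `|\prod_(c <- rts) (- Q`_0)| = 1.
  by rewrite normr_prod; under eq_bigr do rewrite normrN hQ1; exact: big1_eq.
have := congr1 Num.norm E; rewrite E2 normrM.
rewrite [`|\prod_(c <- rts) c|]normr_prod prod_rts.
have := NI hR; set N := \prod_(c <- rts) _ => hN.
have [->|nN] := eqVneq N 0; first by rewrite normr0 mul0r => /eqP; rewrite eq_sym oner_eq0.
have := norm_intr_ge1 hN nN => h1 h2.
have : 2 <= `|N| * 2 by rewrite -{1}(mul1r 2) ler_pM2r.
by rewrite h2 -[X in _ <= X]/(1%:R) ler_nat.
Qed.

Lemma theta_neq0 : theta != 0.
Proof. exact: rts_neq0 theta_in. Qed.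

Definition Pe (n : nat) (e : nat -> algC) : {poly algC} :=
  \sum_(k < n) e k *: 'X^(n.-1 - k).
Definition we (n : nat) (e : nat -> algC) (c : algC) : algC :=
  \sum_(k < n) e k * c^-1 ^+ k.

Lemma Pe_int n e : (forall k, e k \in Num.int) -> Pe n e \is a polyOver Num.int.
Proof.
move=> he; rewrite /Pe; apply/polyOverP => i; rewrite coef_sum; apply: rpred_sum => k _.
rewrite coefZ coefXn; apply: rpredM => //; case: eqP => _; [exact: rpred1 | exact: rpred0].
Qed.

Lemma Pe_horner n e c : c != 0 -> (Pe n e).[c] * c = c ^+ n * we n e c.
Proof.
move=> cn0; rewrite /Pe horner_sum mulr_suml /we mulr_sumr; apply: eq_bigr => k _.
rewrite hornerZ hornerXn -mulrA -exprSr.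
have hk := ltn_ord k.
have -> : (n.-1 - k).+1 = (n - k)%N by lia.
rewrite exprVn mulrCA; congr (e k * _).
have -> : c ^+ n = c ^+ (n - k) * c ^+ k by rewrite -exprD subnK // ltnW.
by rewrite mulfK // expf_neq0.
Qed.

Lemma Pe_coef0 n e : (Pe n.+1 e)`_0 = e n.
Proof.
rewrite /Pe coef_sum big_ord_recr /= coefZ coefXn subnn eqxx mulr1 big1 ?add0r //.
move=> k _; rewrite coefZ coefXn.
have hk := ltn_ord k.
have -> : (0 == n - k)%N = false by apply/eqP; lia.
by rewrite mulr0.
Qed.

Lemma la n e : (forall k, e k \in Num.int) -> (forall k, e k = 0 \/ `|e k| = 1) ->
  we n e theta = 0 -> forall k, (k < n)%N -> e k = 0.
Proof.
move=> he he1; elim: n => [|n IH] // hw k hk.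
case: (he1 n) => [en0|en1].
  move: hw; rewrite /we big_ord_recr /= en0 mul0r addr0 => hw.
  rewrite ltnS leq_eqVlt in hk; case/orP: hk => [/eqP -> //|hk].
  exact: IH.
exfalso.
have hP : (Pe n.+1 e).[theta] != 0 by apply: U; [exact: Pe_int | rewrite Pe_coef0].
have := Pe_horner n.+1 e theta_neq0; rewrite hw mulr0 => /eqP.
by rewrite mulf_eq0 (negbTE hP) (negbTE theta_neq0).
Qed.

Lemma geom (t : algC) n : 0 <= t -> t < 1 -> \sum_(k < n) t ^+ k <= (1 - t)^-1.
Proof.
move=> t0 t1; have ht : 0 < 1 - t by rewrite subr_gt0.
have E : (1 - t) * \sum_(k < n) t ^+ k = 1 - t ^+ n.
  elim: n => [|n IH]; first by rewrite big_ord0 mulr0 expr0 subrr.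
  rewrite big_ord_recr /= mulrDr IH exprSr; ring.
rewrite -[X in X <= _](mulKf (lt0r_neq0 ht)) E.
rewrite -[X in _ <= X]mulr1; apply: ler_wpM2l; first by rewrite invr_ge0 ltW.
by rewrite gerBl exprn_ge0.
Qed.

Definition Cb (c : algC) : algC := (1 - `|c|^-1)^-1.

Lemma Cb_ge1 c : 1 < `|c| -> 1 <= Cb c.
Proof.
move=> hc; have c0 : 0 < `|c| by apply: lt_trans hc.
have ht : 0 < 1 - `|c|^-1 by rewrite subr_gt0 invf_lt1.
by rewrite /Cb invf_ge1 // gerBl invr_ge0 ltW.
Qed.

Lemma we_bound n e c : (forall k, `|e k| <= 1) -> 1 < `|c| -> `|we n e c| <= Cb c.
Proof.
move=> he hc; have c0 : 0 < `|c| by apply: lt_trans hc.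
have cn0 : c != 0 by rewrite -normr_gt0.
apply: le_trans (ler_norm_sum _ _ _) _.
apply: le_trans (geom n _ _); last by rewrite invf_lt1.
  apply: ler_sum => k _; rewrite normrM normrX normrV ?unitfE //.
  by apply: ler_piMl => //; rewrite exprn_ge0 // invr_ge0 ltW.
by rewrite invr_ge0 ltW.
Qed.

Hypothesis hreal : theta \notin Num.real.

Lemma map_conj_M : map_poly Num.Def.conjC (minCpoly theta) = minCpoly theta.
Proof. by apply/polyP => i; rewrite coef_map /=; apply: conj_intr; apply/polyOverP/Mint. Qed.

Lemma conj_in : theta^* \in rts.
Proof.
rewrite -root_prod_XsubC -DM; apply/rootP.
by rewrite -[in LHS]map_conj_M horner_map (rootP (root_minCpoly theta)) rmorph0.
Qed.

Lemma conj_neq : theta^* != theta.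
Proof. by move: hreal; rewrite CrealE. Qed.

Lemma we_conj n e : (forall k, e k \in Num.int) -> we n e theta^* = (we n e theta)^*.
Proof.
move=> he; rewrite /we rmorph_sum; apply: eq_bigr => k _.
rewrite rmorphM rmorphXn fmorphV; apply: esym; apply: (f_equal2 (fun a b => a * b)); [exact: conj_intr (he k) | by []].
Qed.

Lemma lb n e : (forall k, e k \in Num.int) -> (forall k, `|e k| <= 1) ->
  we n e theta != 0 -> 2 <= 2 ^+ n * (`|we n e theta| ^+ 2 * \prod_(c <- rts) Cb c).
Proof.
move=> he he1 hz.
set z := we n e theta.
have hP : (Pe n e).[theta] != 0.
  apply: contra hz => /eqP h; have := Pe_horner n e theta_neq0.
  rewrite h mul0r => /esym/eqP; rewrite mulf_eq0 expf_eq0 (negbTE theta_neq0) andbF.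
  by [].
have hPc := nonvanish (Pe_int n he) hP.
have hN := NI (Pe_int n he).
set N := \prod_(c <- rts) (Pe n e).[c] in hN.
have nN : N != 0 by rewrite prodf_seq_neq0; apply/allP => c hc; exact: hPc.
have N1 : 1 <= `|N| := norm_intr_ge1 hN nN.
have E : N * \prod_(c <- rts) c = \prod_(c <- rts) c ^+ n * \prod_(c <- rts) we n e c.
  rewrite -!big_split /=; apply: eq_big_seq => c hc; exact: Pe_horner (rts_neq0 hc).
have E2 : `|N| * 2 = 2 ^+ n * \prod_(c <- rts) `|we n e c|.
  have := congr1 Num.norm E; rewrite normrM normrM !normr_prod prod_rts.
  have -> : \prod_(i <- rts) `|i ^+ n| = 2 ^+ n.
    by rewrite -prod_rts -prodrXl; apply: eq_bigr => i _; rewrite normrX.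
  by [].
have hcin : theta^* \in rem theta rts by apply: rem_mem conj_neq conj_in.
have Hp : perm_eq rts [:: theta, theta^* & rem theta^* (rem theta rts)].
  apply: perm_trans (perm_to_rem theta_in) _; rewrite perm_cons; exact: perm_to_rem hcin.
set r2 := rem theta^* (rem theta rts) in Hp.
have hr2 : forall c, c \in r2 -> c \in rts by move=> c /mem_rem /mem_rem.
have W : \prod_(c <- rts) `|we n e c| <= `|z| ^+ 2 * \prod_(c <- rts) Cb c.
  rewrite !(perm_big _ Hp) /= !big_cons we_conj // norm_conjC.
  rewrite mulrA -expr2; apply: ler_wpM2l; first exact: exprn_ge0 (normr_ge0 _).
  apply: (@le_trans _ _ (\prod_(c <- r2) Cb c)).
    rewrite [X in X <= _]big_seq [X in _ <= X]big_seq; apply: ler_prod => c hc.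
    by rewrite normr_ge0 /=; apply: we_bound he1 (rts_gt1 (hr2 _ hc)).
  rewrite mulrA; apply: ler_peMl.
    rewrite big_seq; apply: prodr_ge0 => c hc.
    by apply: le_trans (Cb_ge1 (rts_gt1 (hr2 _ hc))); exact: ler01.
  by apply: mulr_ege1; apply: Cb_ge1; apply: rts_gt1; [exact: theta_in | exact: conj_in].
apply: (le_trans _ (ler_wpM2l _ W)); last exact: exprn_ge0.
by rewrite -E2 -{1}(mul1r 2) ler_pM2r.
Qed.

Lemma diff_we n (a b : {ffun 'I_n -> bool}) :
  \sum_(k < n) digit (a k) * theta^-1 ^+ k - \sum_(k < n) digit (b k) * theta^-1 ^+ k
  = 2 * we n (ext (fun i => ed (a i) (b i))) theta.
Proof.
rewrite /we -sumrB mulr_sumr; apply: eq_bigr => k _.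
by rewrite ext_val -mulrBl ed_diff mulrA.
Qed.

Lemma K_ge1 : 1 <= \prod_(c <- rts) Cb c.
Proof.
rewrite big_seq; apply: (big_ind (fun x => 1 <= x)) => //; first exact: mulr_ege1.
by move=> c hc; apply: Cb_ge1; apply: rts_gt1.
Qed.

Lemma main_sec :
  let lam := theta^-1 in
  (forall n : nat, (1 <= n)%N -> size (undup (Aset lam n)) = (2 ^ n)%N) /\
  (exists c : algC, 0 < c /\
     forall n : nat, (1 <= n)%N ->
       forall x y : algC, x \in Aset lam n -> y \in Aset lam n -> x != y ->
         c / sqrtC 2 ^+ n <= `|x - y|).
Proof.
move=> lam; split.
  move=> n _.
  have inj : injective (fun a : {ffun 'I_n -> bool} => \sum_(k < n) digit (a k) * lam ^+ k).
    move=> a b /= hab; apply/ffunP => i.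
    have hw : we n (ext (fun i => ed (a i) (b i))) theta = 0.
      have := diff_we a b; rewrite -/lam hab subrr => /esym/eqP.
      by rewrite mulf_eq0 pnatr_eq0 /= => /eqP.
    have := la (ext_int a b) (ext_01 a b) hw (ltn_ord i).
    by rewrite ext_val; apply: ed_eq0.
  rewrite /Aset undup_id; last by rewrite (map_inj_uniq inj) enum_uniq.
  by rewrite size_map -cardT card_ffun card_bool card_ord.
set K := \prod_(c <- rts) Cb c.
have K1 := K_ge1; have K0 : 0 < K by apply: lt_le_trans K1; exact: ltr01.
exists K^-1; split; first by rewrite invr_gt0.
move=> n _ x y /mapP [a _ ->] /mapP [b _ ->] hxy.
have D := diff_we a b; rewrite -/lam in D.
rewrite (_ : _ - _ = 2 * we n (ext (fun i => ed (a i) (b i))) theta); last exact: D.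
set z := we n _ theta in D *.
have hz : z != 0.
  apply: contra hxy => /eqP hz0; rewrite -subr_eq0; apply/eqP.
  by transitivity (2 * z); [exact: D | rewrite hz0 mulr0].
have hb := lb (ext_int a b) (ext_le1 a b) hz.
have s2 : sqrtC 2 ^+ 2 = 2 :> algC by rewrite sqrtCK.
have sp : 0 < sqrtC 2 :> algC by rewrite sqrtC_gt0 ltr0n.
rewrite -(ler_pXn2r (n:=2)) // ?nnegrE; last first.
- exact: normr_ge0.
- by apply: divr_ge0; [rewrite invr_ge0 ltW | rewrite exprn_ge0 // ltW].
rewrite expr_div_n -exprM mulnC exprM s2 exprVn normrM normr_nat exprMn.
(* goal: K^-2 / 2^n <= 2^2 * |z|^2 *)
have p2n : 0 < 2 ^+ n :> algC by rewrite exprn_gt0 // ltr0n.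
rewrite ler_pdivrMr //.
have hW : 2 / K <= 2 ^+ n * `|z| ^+ 2 by rewrite ler_pdivrMr // -mulrA; exact: hb.
have Ki : K^-1 <= 1 by rewrite invf_le1.
apply: (@le_trans _ _ (K^-1)).
  by rewrite expr2 invfM; apply: ler_piMl; [rewrite invr_ge0 ltW | exact: Ki].
apply: (@le_trans _ _ (2 / K)).
  rewrite -[X in X <= _]mul1r; apply: ler_wpM2r; [by rewrite invr_ge0 ltW | by rewrite ler1n].
apply: le_trans hW _.
rewrite [X in _ <= X]mulrC mulrA -mulrA; apply: ler_wpM2l; first by rewrite ltW.
rewrite -expr2; apply: ler_peMl; [exact: exprn_ge0 (normr_ge0 _) | by rewrite exprn_ege1 // ler1n].
Qed.

End Garsia.

Theorem mainTheorem10 (theta : algC) :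
  complex_garsia theta ->
  ((minCpoly theta)`_0 = 2 \/ (minCpoly theta)`_0 = -2) ->
  let lam := theta^-1 in
  (forall n : nat, (1 <= n)%N -> size (undup (Aset lam n)) = (2 ^ n)%N) /\
  (exists c : algC, 0 < c /\
     forall n : nat, (1 <= n)%N ->
       forall x y : algC, x \in Aset lam n -> y \in Aset lam n -> x != y ->
         c / sqrtC 2 ^+ n <= `|x - y|).
Proof.
move=> [[hA _ hgar] hreal] h0.
exact: main_sec hA hgar h0 hreal.
Qed.
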